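(* Let $\{S_0,S_1,\dots,S_m\}$ be an admissible cover of $S=S_{p,q}$. Then for every $\ell\in\{0,1,\dots,m\}$, either $\mathbb V_{\mathbb F}\big(\bigcup_{i=0}^{\ell-1}S_i\big)=\varnothing$, or for every $\mathbf s\in \mathbb V_{\mathbb F}\big(\bigcup_{i=0}^{\ell-1}S_i\big)$ we have $$\mathbb V_{\mathbb F}\Big(\bigcup_{i=0}^{\ell}S_i\Big)=\mathbb V_{\mathbb F}\Big(\bigcup_{i=0}^{\ell}L_{\mathbf a=\mathbf s}(S_i)\Big).$$ (For $\ell=0$ the union $\bigcup_{i=0}^{-1}S_i$ is empty and its zero set is $\mathbb F^n$.)
   Context: Let $\mathbb F$ be a field of characteristic zero, $\mathbf x=(x_1,\dots,x_n)$ variables and $\mathbf a=(a_1,\dots,a_n)$ new indeterminates. For $p,q\in\mathbb F[\mathbf x]$ write $p(\mathbf x+\mathbf a)-q(\mathbf x)=\sum_{\alpha\in\mathbb N^n}c_\alpha(\mathbf a)\mathbf x^\alpha$ with $c_\alpha(\mathbf a)\in\mathbb F[\mathbf a]$, and let $S=S_{p,q}$ be the family of nonzero coefficients $c_\alpha(\mathbf a)$ (indexed by $\alpha$ with $\mathbf x^\alpha$ in the support of $p(\mathbf x+\mathbf a)-q(\mathbf x)$). On $\mathbb N^n$, $\beta\ge\alpha$ means $\beta_i\ge\alpha_i$ for all $i$, and $\beta>\alpha$ means $\beta\ge\alpha$, $\beta\neq\alpha$. A cover of $S$ is a collection $\{S_0,\dots,S_m\}$ of subsets whose union is $S$. It is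 admissible if (1) every polynomial in $S_0$ has total degree at most one in $\mathbf a$; and (2) for every $\ell=1,\dots,m$, if $c_\alpha\in S_\ell$ then $c_\beta\in\bigcup_{i=0}^{\ell-1}S_i$ for all $\beta>\alpha$ with $c_\beta\neq 0$. For $f\in\mathbb F[\mathbf a]$ let $f=\sum_{i\ge0}H^i(f)$ be its decomposition into homogeneous components in $\mathbf a$ ($H^i(f)$ homogeneous of degree $i$). For $\mathbf s\in\mathbb F^n$, the linearization of $f$ at $\mathbf s$ is $L_{\mathbf a=\mathbf s}(f)=H^0(f)+H^1(f)(\mathbf a)+\sum_{i\ge2}H^i(f)(\mathbf s)$, and for a set $P$ of polynomials $L_{\mathbf a=\mathbf s}(P)=\{L_{\mathbf a=\mathbf s}(f):f\in P\}$. For $P\subseteq\mathbb F[\mathbf a]$, $\mathbb V_{\mathbb F}(P)=\{\mathbf v\in\mathbb F^n: f(\mathbf v)=0\ \forall f\in P\}$. *)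

(* Defs.v *)
From HB Require Import structures.
From mathcomp Require Import all_boot all_order all_algebra.
From mathcomp Require Import mpoly.
Set Implicit Arguments. Unset Strict Implicit. Unset Printing Implicit Defensive.
Import Order.TTheory GRing.Theory.
Local Open Scope ring_scope.

Section Defs.
Variables (F : fieldType) (n : nat).

(* Polynomials in a = (a_1..a_n): {mpoly F[n]}.
   Polynomials in x with coefficients in F[a]: {mpoly {mpoly F[n]}[n]}. *)

(* p(x + a) as a polynomial in x with coefficients in F[a] *)
Definition shift_xa (p : {mpoly F[n]}) : {mpoly {mpoly F[n]}[n]} :=
  mmap (fun c : F => (c%:MP_[n])%:MP_[n])
       (fun i : 'I_n => 'X_i + ('X_i : {mpoly F[n]})%:MP_[n]) p.

Definition diff_pq (p q : {mpoly F[n]}) : {mpoly {mpoly F[n]}[n]} :=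
  shift_xa p - map_mpoly (fun c : F => c%:MP_[n]) q.

Definition coef_pq (p q : {mpoly F[n]}) (alpha : 'X_{1..n}) : {mpoly F[n]} :=
  (diff_pq p q)@_alpha.

Definition S_pq (p q : {mpoly F[n]}) : {mpoly F[n]} -> Prop :=
  fun f => exists2 alpha, alpha \in msupp (diff_pq p q) & f = coef_pq p q alpha.

Definition mnm_geq (beta alpha : 'X_{1..n}) : bool := [forall i, alpha i <= beta i]%N.
Definition mnm_gt (beta alpha : 'X_{1..n}) : bool := mnm_geq beta alpha && (beta != alpha).

Definition union_lt (Sc : nat -> {mpoly F[n]} -> Prop) (k : nat) : {mpoly F[n]} -> Prop :=
  fun f => exists2 i, (i < k)%N & Sc i f.

Definition admissible_cover (p q : {mpoly F[n]}) (m : nat)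
    (Sc : nat -> {mpoly F[n]} -> Prop) : Prop :=
  [/\
      (forall f, S_pq p q f <-> union_lt Sc m.+1 f),
      (forall f, Sc 0%N f -> forall mo, mo \in msupp f -> (mdeg mo <= 1)%N) &
      (forall l : nat, (1 <= l <= m)%N -> forall alpha : 'X_{1..n},
          Sc l (coef_pq p q alpha) ->
          forall beta : 'X_{1..n}, mnm_gt beta alpha -> coef_pq p q beta != 0 ->
            union_lt Sc l (coef_pq p q beta))].

Definition hcomp (i : nat) (f : {mpoly F[n]}) : {mpoly F[n]} :=
  \sum_(mo <- msupp f | mdeg mo == i) f@_mo *: 'X_[mo].

(* linearization L_{a=s}(f) = H^0 f + H^1 f + sum_{i>=2} H^i(f)(s)
   (degrees of f are < msize f, so the sum is finite) *)
Definition linearize (s : 'I_n -> F) (f : {mpoly F[n]}) : {mpoly F[n]} :=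
  hcomp 0 f + hcomp 1 f + (\sum_(2 <= i < msize f) (hcomp i f).@[s])%:MP_[n].

Definition linearize_set (s : 'I_n -> F) (P : {mpoly F[n]} -> Prop)
  : {mpoly F[n]} -> Prop :=
  fun g => exists2 f, P f & g = linearize s f.

Definition zero_set (P : {mpoly F[n]} -> Prop) (v : 'I_n -> F) : Prop :=
  forall f, P f -> f.@[v] = 0.

End Defs.

(* Main.v *)
Require Import Defs.
From HB Require Import structures.
From mathcomp Require Import all_boot all_order all_algebra.
From mathcomp Require Import mpoly ring.
Set Implicit Arguments. Unset Strict Implicit. Unset Printing Implicit Defensive.
Import Order.TTheory GRing.Theory.
Local Open Scope ring_scope.


Section S.
Variables (F : fieldType) (n : nat).
Implicit Types (f D : {mpoly F[n]}).

Lemma coefMXi_gt f (i : 'I_n) (g : 'X_{1..n}) : (0 < g i)%N ->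
  (f * 'X_i)@_g = f@_(g - U_(i))%MM.
Proof.
move=> gi; have E : g = (U_(i) + (g - U_(i)))%MM.
  apply/mnmP=> j; rewrite mnmDE mnmBE mnm1E.
  case: (eqVneq i j) => [<-|_] /=; [by rewrite addnC subnK | by rewrite add0n subn0].
by rewrite {1}E mcoeffMX.
Qed.

Lemma coefMXi_0 f (i : 'I_n) (g : 'X_{1..n}) : g i = 0%N -> (f * 'X_i)@_g = 0.
Proof.
move=> gi; apply/eqP; rewrite mcoeff_eq0; apply/negP => H.
move: H; rewrite (perm_mem (msuppMX _ _)) => /mapP [m' _ E].
by move: gi; rewrite E mnmDE mnm1E eqxx.
Qed.

Definition Pr f (b : 'X_{1..n}) :=
  (forall g, f@_g != 0 -> forall i, (g i <= b i)%N) /\ f@_b = 1.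

Lemma Pr1 : Pr 1 0%MM.
Proof.
split; last by rewrite mcoeff1 eqxx.
move=> g; rewrite mcoeff1; case: (eqVneq g 0%MM) => [-> _ i|]; first by [].
by rewrite eqxx.
Qed.

Lemma PrM f b (i : 'I_n) (c : F) : Pr f b -> Pr (f * ('X_i + c%:MP)) (b + U_(i))%MM.
Proof.
case=> H1 H2.
have E g : (f * ('X_i + c%:MP))@_g = (f * 'X_i)@_g + c * f@_g.
  by rewrite mulrDr mcoeffD [f * c%:MP]mulrC mcoeffCM.
split.
  move=> g; rewrite E => nz j; rewrite mnmDE mnm1E.
  case: (posnP (g i)) => gi.
    rewrite coefMXi_0 // add0r in nz.
    have : f@_g != 0 by apply: contraNneq nz => ->; rewrite mulr0.
    by move/H1/(_ j) => /leq_trans; apply; rewrite leq_addr.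
  have [nz1|z1] := eqVneq (f * 'X_i)@_g 0.
    rewrite nz1 add0r in nz.
    have : f@_g != 0 by apply: contraNneq nz => ->; rewrite mulr0.
    by move/H1/(_ j) => /leq_trans; apply; rewrite leq_addr.
  move: z1; rewrite coefMXi_gt // => /H1 /(_ j); rewrite mnmBE mnm1E.
  case: (eqVneq i j) => [<-|_] /=; last by rewrite subn0 addn0.
  by rewrite leq_subLR addnC.
rewrite E coefMXi_gt; last by rewrite mnmDE mnm1E eqxx addn1.
have -> : (b + U_(i) - U_(i))%MM = b.
  by apply/mnmP=> j; rewrite mnmBE mnmDE addnK.
rewrite H2; have -> : f@_(b + U_(i)) = 0.
  apply/eqP; apply: contraT => /H1 /(_ i); rewrite mnmDE mnm1E eqxx.
  by rewrite addn1 ltnn.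
by rewrite mulr0 addr0.
Qed.


Lemma PrX f b (i : 'I_n) (c : F) k : Pr f b ->
  Pr (f * ('X_i + c%:MP)^+k) (b + U_(i) *+ k)%MM.
Proof.
elim: k f b => [|k IH] f b H; first by rewrite expr0 mulr1 mulm0n addm0.
rewrite exprS mulrA mulmS addmA; apply: IH; exact: PrM.
Qed.

Lemma PrP (w : 'I_n -> F) (b : 'X_{1..n}) (r : seq 'I_n) :
  Pr (\prod_(i <- r) ('X_i + (w i)%:MP)^+(b i)) (\big[+%MM/0%MM]_(i <- r) (U_(i) *+ b i))%MM.
Proof.
elim: r => [|i r IH]; first by rewrite !big_nil; exact: Pr1.
rewrite !big_cons mulrC addmC; exact: PrX.
Qed.

Lemma Pr_mmap1 (w : 'I_n -> F) (b : 'X_{1..n}) :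
  Pr (mmap1 (fun i => 'X_i + (w i)%:MP) b) b.
Proof.
have := PrP w b (index_enum 'I_n).
have -> : (\big[+%MM/0%MM]_(i <- index_enum 'I_n) (U_(i) *+ b i))%MM = b.
  apply/mnmP => j; rewrite mnm_sumE (bigD1 j) //= big1 /=.
    by rewrite mulmnE mnm1E eqxx mul1n addn0.
  by move=> i /negbTE ij; rewrite mulmnE mnm1E ij.
by [].
Qed.


Definition shiftp (u : 'I_n -> F) D : {mpoly F[n]} :=
  mmap (@mpolyC n F) (fun i => 'X_i + (u i)%:MP_[n]) D.

Lemma coef_shift_N (w : 'I_n -> F) D (a : 'X_{1..n}) :
  (forall b, mnm_gt b a -> D@_b = 0) -> (shiftp w D)@_a = D@_a.
Proof.
move=> HN; rewrite /shiftp /mmap raddf_sum /=.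
rewrite [in RHS](mpolyE D) raddf_sum /=.
apply: eq_big_seq => m mD; rewrite mcoeffCM mcoeffZ mcoeffX.
case: (eqVneq m a) => [->|nma].
  have [_ ->] := Pr_mmap1 w a; by rewrite ?eqxx.
have -> : (mmap1 (fun i => 'X_i + (w i)%:MP) m)@_a = 0.
  apply/eqP; apply: contraT => nz.
  have [H1 _] := Pr_mmap1 w m; have le := H1 _ nz.
  have : mnm_gt m a by rewrite /mnm_gt /mnm_geq nma andbT; apply/forallP.
  by move/HN; move: mD; rewrite mcoeff_msupp => /eqP.
by rewrite mulr0.
Qed.

End S.

Lemma mmap_morph (n : nat) (R S T : comRingType) (f : R -> S) (h : 'I_n -> S)
   (psi : {rmorphism S -> T}) (p : {mpoly R[n]}) :
  psi (mmap f h p) = mmap (psi \o f) (psi \o h) p.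
Proof.
rewrite /mmap rmorph_sum; apply: eq_bigr => m _.
by rewrite rmorphM /mmap1 rmorph_prod; congr (_ * _); apply: eq_bigr => i _; rewrite rmorphXn.
Qed.

Lemma mmap_ext (n : nat) (R S : ringType) (f1 f2 : R -> S) (h1 h2 : 'I_n -> S)
   (p : {mpoly R[n]}) : f1 =1 f2 -> h1 =1 h2 -> mmap f1 h1 p = mmap f2 h2 p.
Proof.
move=> ef eh; rewrite /mmap; apply: eq_bigr => m _.
by rewrite ef (mmap1_eq _ eh).
Qed.

Section S2.
Variables (F : fieldType) (n : nat).

Lemma shiftpC (w : 'I_n -> F) c : shiftp w c%:MP = c%:MP.
Proof. by rewrite /shiftp mmapC. Qed.

Lemma shiftp_comp (w u : 'I_n -> F) (D : {mpoly F[n]}) :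
  shiftp w (shiftp u D) = shiftp (fun i => w i + u i) D.
Proof.
rewrite {1}/shiftp (mmap_morph _ _ (shiftp w)); apply: mmap_ext => [c|i] /=.
  exact: shiftpC.
rewrite /shiftp mmapD mmapX mmap1U mmapC /= -addrA; congr (_ + _).
by rewrite raddfD.
Qed.

Lemma coef_pq_eval (p q : {mpoly F[n]}) (b : 'X_{1..n}) (u : 'I_n -> F) :
  (coef_pq p q b).@[u] = (shiftp u p)@_b - q@_b.
Proof.
rewrite /coef_pq /diff_pq.
rewrite (@mcoeffB n {mpoly F[n]}).
rewrite (@mevalB n F u).
have -> : (fun c : F => c%:MP_[n]) = (@mpolyC n F) by reflexivity.
congr (_ - _); last by rewrite (mcoeff_map_mpoly (@mpolyC n F)) mevalC.
transitivity ((map_mpoly (meval u) (shift_xa p))@_b).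
  by rewrite (mcoeff_map_mpoly (meval u)).
rewrite /shift_xa (mmap_morph _ _ (map_mpoly (meval u))) /shiftp.
apply: (congr1 (mcoeff b)).
apply: mmap_ext => [c|i] /=; first by rewrite map_mpolyC; congr mpolyC; exact: mevalC.
rewrite rmorphD /= map_mpolyX map_mpolyC; congr (_ + _); congr mpolyC; exact: mevalXU.
Qed. End S2.


Section S3.
Variables (F : fieldType) (n : nat).
Implicit Types (f : {mpoly F[n]}) (u : 'I_n -> F).

Lemma hcomp_eval d f u : (hcomp d f).@[u] =
  \sum_(mo <- msupp f | mdeg mo == d) f@_mo * \prod_i u i ^+ mo i.
Proof. by rewrite /hcomp (big_morph _ (mevalD u) (meval0 u)); apply: eq_bigr => mo _; rewrite mevalZ mevalX. Qed.

Lemma hcomp_scale d f (k : F) u :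
  (hcomp d f).@[fun i => k * u i] = k ^+ d * (hcomp d f).@[u].
Proof.
rewrite !hcomp_eval mulr_sumr; apply: eq_bigr => mo /eqP <-.
rewrite (eq_bigr (fun i => k ^+ mo i * u i ^+ mo i)) => [|i _]; last by rewrite exprMn.
by rewrite big_split /= prodrXr mdegE mulrCA.
Qed.

Lemma hcomp_big d f : (msize f <= d)%N -> hcomp d f = 0.
Proof.
move=> le; rewrite /hcomp big1_seq // => mo /andP [/eqP E /msize_mdeg_lt].
by rewrite E ltnNge le.
Qed.

Lemma eval_hsum f u N : (msize f <= N)%N -> f.@[u] = \sum_(d < N) (hcomp d f).@[u].
Proof.
move=> le; rewrite mevalE.
rewrite (eq_bigr (fun d : 'I_N => \sum_(mo <- msupp f) (if mdeg mo == d then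
   f@_mo * \prod_i u i ^+ mo i else 0))) => [|d _]; last by rewrite hcomp_eval big_mkcond.
rewrite exchange_big /=; apply: eq_big_seq => mo mof.
have lt : (mdeg mo < N)%N by apply: leq_trans (msize_mdeg_lt mof) le.
by rewrite -big_mkcond (big_pred1 (Ordinal lt)) // => d; rewrite /= eq_sym -val_eqE.
Qed.

Lemma hsum_ext f u k : \sum_(2 <= d < msize f + k) (hcomp d f).@[u] =
   \sum_(2 <= d < msize f) (hcomp d f).@[u].
Proof.
elim: k => [|k IH]; first by rewrite addn0.
case: (ltnP (msize f + k) 2) => H.
  rewrite big_geq; last by rewrite addnS.
  by rewrite big_geq // (leq_trans _ (ltnW H)) // leq_addr.
by rewrite addnS big_nat_recr //= IH hcomp_big ?leq_addr // meval0 addr0.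
Qed.

Lemma eval_split f u : f.@[u] = (hcomp 0 f).@[u] + (hcomp 1 f).@[u] +
   \sum_(2 <= d < msize f) (hcomp d f).@[u].
Proof.
rewrite (@eval_hsum f u (msize f + 2)) ?leq_addr // -(big_mkord xpredT (fun d => (hcomp d f).@[u])).
rewrite big_ltn; last by rewrite addn2. rewrite big_ltn; last by rewrite addn2. by rewrite (hsum_ext f u 2) addrA. Qed.

Lemma eval_linearize f s v : (linearize s f).@[v] = (hcomp 0 f).@[v] + (hcomp 1 f).@[v] +
   \sum_(2 <= d < msize f) (hcomp d f).@[s].
Proof. by rewrite /linearize !mevalD mevalC. Qed.

Lemma hcomp0_const f u v : (hcomp 0 f).@[u] = (hcomp 0 f).@[v].
Proof.
rewrite !hcomp_eval; apply: eq_bigr => mo; rewrite mdeg_eq0 => /eqP ->.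
by rewrite !big1 // => i _; rewrite mnm0E expr0.
Qed.

Lemma hcomp1_lin f u v : (hcomp 1 f).@[u] - (hcomp 1 f).@[v] =
   (hcomp 1 f).@[fun i => u i - v i].
Proof.
rewrite !hcomp_eval -sumrB; apply: eq_bigr => mo /mdeg1P [j /eqP ->].
rewrite -mulrBr; congr (_ * _).
have P w : \prod_i w i ^+ (U_(j)%MM : 'X_{1..n}) i = w j :> F.
  by rewrite -(mmap1U w j).
by rewrite !P.
Qed.

End S3.


Lemma natr_inj0 (F : fieldType) : [pchar F] =i pred0 -> injective (fun k : nat => k%:R : F).
Proof.
move=> /pcharf0P H i j /= E.
wlog le : i j E / (i <= j)%N.
  by move=> W; case: (leqP i j) => [|/ltnW] le; [|apply/esym]; apply: W.
have: (j - i)%:R == 0 :> F by rewrite natrB // E subrr.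
by rewrite H subn_eq0 => le2; apply/eqP; rewrite eqn_leq le le2.
Qed.

Lemma poly_vanish (F : fieldType) : [pchar F] =i pred0 -> forall (N : nat) (c : nat -> F),
  (forall k : nat, \sum_(d < N) c d * k%:R ^+ d = 0) -> forall d, (d < N)%N -> c d = 0.
Proof.
move=> ch N c H.
have r0 : \poly_(d < N) c d = 0.
  apply/eqP; apply: contraT => nz.
  have := @max_poly_roots F _ [seq k%:R | k <- iota 0 N] nz.
  rewrite size_map size_iota => W.
  have : (N < N)%N.
    apply: leq_trans (size_poly _ _); apply: W.
      by apply/allP => x /mapP [k _ ->]; rewrite /root horner_poly H.
    by rewrite map_inj_uniq ?iota_uniq //; apply: natr_inj0.
  by rewrite ltnn.
by move=> d lt; have := congr1 (fun p : {poly F} => p`_d) r0; rewrite coef_poly lt coef0.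
Qed.

Section Core.
Variables (F : fieldType) (n : nat).

Lemma shiftp_ext (u1 u2 : 'I_n -> F) D : u1 =1 u2 -> shiftp u1 D = shiftp u2 D.
Proof. by move=> E; apply: mmap_ext => // i; rewrite E. Qed.

Lemma shiftpB (w : 'I_n -> F) D1 D2 : shiftp w (D1 - D2) = shiftp w D1 - shiftp w D2.
Proof. by rewrite /shiftp mmapB. Qed.

Lemma core (ch : [pchar F] =i pred0) (p q : {mpoly F[n]}) a (s v : 'I_n -> F) :
 (forall b, mnm_gt b a -> (coef_pq p q b).@[s] = 0 /\ (coef_pq p q b).@[v] = 0) ->
 \sum_(2 <= d < msize (coef_pq p q a)) (hcomp d (coef_pq p q a)).@[v] =
 \sum_(2 <= d < msize (coef_pq p q a)) (hcomp d (coef_pq p q a)).@[s].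
Proof.
move=> Hgt; set f := coef_pq p q a.
pose h := fun i => v i - s i.
pose D := shiftp v p - shiftp s p.
have shE u b : (shiftp u p)@_b = (coef_pq p q b).@[u] + q@_b.
  by rewrite coef_pq_eval subrK.
have DN b : mnm_gt b a -> D@_b = 0.
  by move=> /Hgt [H1 H2]; rewrite mcoeffB !shE H1 H2 subrr.
pose e := f.@[v] - f.@[s].
have De : D@_a = e by rewrite mcoeffB !shE /e; ring.
pose kh (k : nat) := fun i => k%:R * h i.
have step k : (shiftp (kh k.+1) p)@_a - (shiftp (kh k) p)@_a = e.
  have E : shiftp (fun i => kh k i - s i) D = shiftp (kh k.+1) p - shiftp (kh k) p.
    rewrite /D shiftpB !shiftp_comp; congr (_ - _); apply: shiftp_ext => i.
      by rewrite /kh /h -natr1; ring.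
    by rewrite /kh; ring.
  by rewrite -mcoeffB -E coef_shift_N.
have tele k : (shiftp (kh k) p)@_a - (shiftp (kh 0) p)@_a = k%:R * e.
  elim: k => [|k IH]; first by rewrite subrr mul0r.
  by rewrite -natr1 mulrDl mul1r -IH -(step k); ring.
pose M := msize f.
pose A d := (hcomp d f).@[h].
have evk k : f.@[kh k] = \sum_(d < M.+2) k%:R ^+ d * A d.
  rewrite (@eval_hsum _ _ f _ M.+2); last by rewrite /M leqW.
  by apply: eq_bigr => d _; rewrite /kh hcomp_scale.
pose c d := if d == 0%N then 0 else if d == 1%N then A 1%N - e else A d.
have Hc k : \sum_(d < M.+2) c d * k%:R ^+ d = 0.
  have := tele k; rewrite !shE /f -/f !evk.
  rewrite !big_ord_recl /= /c /=.
  have -> : \sum_(i < M) (0%:R : F) ^+ (bump 0 (bump 0 i)) * A (bump 0 (bump 0 i)) = 0.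
    by rewrite big1 // => i _; rewrite expr0n /= mul0r.
  have -> : \sum_(i < M) (if bump 0 (bump 0 i) == 0%N then 0
        else if bump 0 (bump 0 i) == 1%N then A 1%N - e else A (bump 0 (bump 0 i))) *
         k%:R ^+ bump 0 (bump 0 i) = \sum_(i < M) k%:R ^+ (bump 0 (bump 0 i)) * A (bump 0 (bump 0 i)).
    by apply: eq_bigr => i _; rewrite /bump /= mulrC.
  rewrite /bump /= !expr0 !expr1 !addn0 => E.
  apply/eqP; rewrite -[X in _ == X](subrr (k%:R * e)) -{1}E ?addn0; apply/eqP; ring.
have A1 : A 1%N = e.
  by have := poly_vanish ch Hc (d := 1%N) isT; rewrite /c /= => /eqP; rewrite subr_eq0 => /eqP.
have := eval_split f v; have := eval_split f s.
rewrite (hcomp0_const f s v) => Es Ev.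
have : e = (hcomp 1 f).@[v] - (hcomp 1 f).@[s] + (\sum_(2 <= d < msize f) (hcomp d f).@[v] -
   \sum_(2 <= d < msize f) (hcomp d f).@[s]).
  by rewrite /e Ev Es; ring.
rewrite hcomp1_lin -/(A 1%N) A1 => he.
have : \sum_(2 <= d < msize f) (hcomp d f).@[v] - \sum_(2 <= d < msize f) (hcomp d f).@[s] = 0.
  by apply: (addrI e); rewrite addr0 -he.
by move/eqP; rewrite subr_eq0 => /eqP.
Qed.

End Core.


Lemma zero_set_mono (F : fieldType) (n : nat) (Sc : nat -> {mpoly F[n]} -> Prop) j k x :
  (j <= k)%N -> zero_set (union_lt Sc k) x -> zero_set (union_lt Sc j) x.
Proof. by move=> jk H f [i ij Sf]; apply: H; exists i => //; apply: leq_trans jk. Qed.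

Unset Implicit Arguments.
Theorem theorem1p1 (F : fieldType) (n : nat) (F_char0 : [pchar F] =i pred0)
    (p q : {mpoly F[n]}) (m : nat) (Sc : nat -> {mpoly F[n]} -> Prop) :
  admissible_cover p q m Sc ->
  forall l : nat, (l <= m)%N ->
    (forall v : 'I_n -> F, ~ zero_set (union_lt Sc l) v)
    \/
    (forall s : 'I_n -> F, zero_set (union_lt Sc l) s ->
       forall v : 'I_n -> F,
         zero_set (union_lt Sc l.+1) v <->
         zero_set (union_lt (fun i => linearize_set s (Sc i)) l.+1) v).
Proof.
move=> [Hcov H0 Hadm] l lm; right => s Hs v.
have K j f s' v' : (j <= m)%N -> Sc j f -> zero_set (union_lt Sc j) s' ->
    zero_set (union_lt Sc j) v' -> f.@[v'] = (linearize s' f).@[v'].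
  move=> jm Sf Hs' Hv'; rewrite eval_linearize (eval_split f v'); congr (_ + _).
  case: (posnP j) => [j0|jpos].
    subst j.
    have Z d u : (2 <= d)%N -> (hcomp d f).@[u] = 0.
      move=> d2; rewrite /hcomp big1_seq ?meval0 // => mo /andP [/eqP E mf].
      by have := H0 f Sf mo mf; rewrite E leqNgt (leq_trans _ d2).
    by rewrite !big_nat !big1 // => d /andP [d2 _]; apply: Z.
  have [a af fE] : S_pq p q f by apply/Hcov; exists j.
  subst f; apply: core => // b gt.
  have [->|nz] := eqVneq (coef_pq p q b) 0; first by rewrite !meval0.
  have U := Hadm j (introT andP (conj jpos jm)) a Sf b gt nz.
  by split; [apply: Hs' | apply: Hv'].
split.
  move=> Hv g [i il [f Sf ->]].
  have im : (i <= m)%N by apply: leq_trans lm.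
  rewrite -(K i f s v im Sf).
  - by apply: Hv; exists i.
  - by apply: zero_set_mono Hs.
  - by apply: zero_set_mono Hv; apply: ltnW.
move=> HL.
suff W : forall i, (i <= l.+1)%N -> zero_set (union_lt Sc i) v by apply: W.
elim=> [_ f [i //]|i IH il f [j ji Sf]].
have il' : (i <= l)%N by [].
case: (ltnP j i) => [jlt|jge].
  by apply: (IH (ltnW il)); exists j.
have ji' : j = i by apply/eqP; rewrite eqn_leq jge andbT -ltnS.
subst j.
rewrite (K i f s v (leq_trans il' lm) Sf).
- by apply: HL; exists i => //; exists f.
- by apply: zero_set_mono Hs.
- by apply: IH; apply: ltnW.
Qed.
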